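(* Let $A$, $c$, $B$ be as in the context. (i) A vector $u\in\mathbb N^n$ lies in $\mathcal O_c$ if and only if $Q_u\cap\mathbb Z^{n-d}=\{0\}$. (ii) If $u\in\mathcal O_c$ and $\tau$ is a face of $\Delta_c$, then the group relaxation $G^\tau(Au)$ solves $IP_{A,c}(Au)$ if and only if $Q_u^{\bar\tau}\cap\mathbb Z^{n-d}=\{0\}$.
   Context: $A\in\mathbb Z^{d\times n}$ has rank $d$, columns $a_1,\dots,a_n$, $cone(A)$ pointed, $\{x\in\mathbb R^n_{\ge0}:Ax=0\}=\{0\}$, $\mathbb ZA=\mathbb Z^d$, $\mathbb NA=\{Au:u\in\mathbb N^n\}$. For $c\in\mathbb Z^n$ and $b\in\mathbb NA$, $IP_{A,c}(b)=\min\{c\cdot x: Ax=b,\ x\in\mathbb N^n\}$. The regular triangulation $\Delta_c$ is the collection of $\sigma\subseteq\{1,\dots,n\}$ for which some $y\in\mathbb R^d$ has $y\cdot a_j=c_j$ ($j\in\sigma$), $y\cdot a_j<c_j$ ($j\notin\sigma$). $c$ is generic: $\Delta_c$ is a triangulation and every $IP_{A,c}(b)$, $b\in\mathbb NA$, has a unique optimal solution. $\mathcal O_c\subseteq\mathbb N^n$ is the set of optimal solutions of all $IP_{A,c}(b)$, $b\in\mathbb NA$. For a maximal face $\sigma$ of $\Delta_c$ let $\tilde c_{\bar\sigma}=c_{\bar\sigma}-c_\sigma A_\sigma^{-1}A_{\bar\sigma}$, and for a face $\tau\subseteq\sigma$ let $\tilde c_{\bar\tau}$ be its extension by zeros to $\mathbb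 R^{|\bar\tau|}$. The group relaxation $G^\tau(b)$ is $\min\{\tilde c_{\bar\tau}\cdot x_{\bar\tau}: A_\tau x_\tau+A_{\bar\tau}x_{\bar\tau}=b,\ x_{\bar\tau}\ge0,\ (x_\tau,x_{\bar\tau})\in\mathbb Z^n\}$; it solves $IP_{A,c}(b)$ if its optimal solution is non-negative. $B\in\mathbb Z^{n\times(n-d)}$ has columns forming a basis of $\{x\in\mathbb Z^n:Ax=0\}$; $B^{\bar\tau}$ deletes the rows of $B$ indexed by $\tau$, and $\pi_\tau:\mathbb R^n\to\mathbb R^{|\bar\tau|}$ deletes coordinates indexed by $\tau$. $Q_u=\{z\in\mathbb R^{n-d}: Bz\le u,\ (-cB)z\le0\}$ and $Q_u^{\bar\tau}=\{z\in\mathbb R^{n-d}: B^{\bar\tau}z\le\pi_\tau(u),\ (-cB)z\le0\}$. *)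

(* Defs.v *)
From HB Require Import structures.
From mathcomp Require Import all_boot all_order all_algebra.
From mathcomp Require Import reals.
Set Implicit Arguments. Unset Strict Implicit. Unset Printing Implicit Defensive.
Import Order.TTheory GRing.Theory Num.Theory.
Local Open Scope ring_scope.

Section IPDefs.
Variables (R : realType) (d n : nat).
Variables (A : 'M[int]_(d, n)) (c : 'rV[int]_n).

Definition toR {m k : nat} (M : 'M[int]_(m, k)) : 'M[R]_(m, k) :=
  map_mx (fun z : int => z%:~R) M.

Definition nonneg_vec (u : 'cV[int]_n) : Prop := forall i, 0 <= u i 0.

Definition cdot (x : 'cV[int]_n) : int := (c *m x) 0 0.

Definition cone_pointed : Prop :=
  forall y : 'cV[R]_d,
    (exists l : 'cV[R]_n, (forall i, 0 <= l i 0) /\ y = toR A *m l) ->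
    (exists m : 'cV[R]_n, (forall i, 0 <= m i 0) /\ - y = toR A *m m) ->
    y = 0.

Definition nonneg_kernel_trivial : Prop :=
  forall x : 'cV[R]_n, (forall i, 0 <= x i 0) -> toR A *m x = 0 -> x = 0.

Definition lattice_full : Prop :=
  forall b : 'cV[int]_d, exists x : 'cV[int]_n, A *m x = b.

Definition in_NA (b : 'cV[int]_d) : Prop :=
  exists u : 'cV[int]_n, nonneg_vec u /\ A *m u = b.

Definition IP_optimal (b : 'cV[int]_d) (u : 'cV[int]_n) : Prop :=
  [/\ nonneg_vec u, A *m u = b &
      forall x : 'cV[int]_n, nonneg_vec x -> A *m x = b -> cdot u <= cdot x].

Definition IP_unique_opt (b : 'cV[int]_d) : Prop :=
  (exists u, IP_optimal b u) /\
  (forall u u', IP_optimal b u -> IP_optimal b u' -> u = u').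

Definition Oc (u : 'cV[int]_n) : Prop :=
  exists b, in_NA b /\ IP_optimal b u.

Definition in_Delta (s : {set 'I_n}) : Prop :=
  exists y : 'rV[R]_d, forall j : 'I_n,
    (j \in s -> (y *m toR A) 0 j = (c 0 j)%:~R) /\
    (j \notin s -> (y *m toR A) 0 j < (c 0 j)%:~R).

Definition Asub (s : {set 'I_n}) : 'M[R]_(d, #|s|) :=
  colsub (fun k : 'I_#|s| => enum_val k) (toR A).
Definition csub (s : {set 'I_n}) : 'rV[R]_#|s| :=
  colsub (fun k : 'I_#|s| => enum_val k) (toR c).

(* Delta_c is a triangulation: every cell is simplicial, i.e. the columns
   a_j, j in sigma, are linearly independent *)
Definition Delta_triangulation : Prop :=
  forall s, in_Delta s -> \rank (Asub s) = #|s|.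

Definition generic : Prop :=
  Delta_triangulation /\ forall b, in_NA b -> IP_unique_opt b.

Definition maximal_face (s : {set 'I_n}) : Prop :=
  in_Delta s /\ forall s', in_Delta s' -> s \subset s' -> s' = s.

(* A_sigma and c_sigma as a d x d matrix / length-d row (for a maximal face
   one has #|sigma| = d, in which case conform_mx is the identity cast) *)
Definition Asq (s : {set 'I_n}) : 'M[R]_d := conform_mx 1%:M (Asub s).
Definition csq (s : {set 'I_n}) : 'rV[R]_d := conform_mx 0 (csub s).

(* tilde c for the maximal face sigma, as a vector indexed by all of [n]:
   tilde c_j = c_j - (c_sigma A_sigma^{-1} A_{bar sigma})_j for j notin sigma,
   and 0 for j in sigma (extension by zeros). *)
Definition ctilde (s : {set 'I_n}) (j : 'I_n) : R :=
  if j \in s then 0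
  else (c 0 j)%:~R - (csq s *m invmx (Asq s) *m toR A) 0 j.

Definition Gobj (s t : {set 'I_n}) (x : 'cV[int]_n) : R :=
  \sum_(j | j \notin t) ctilde s j * (x j 0)%:~R.

Definition G_feasible (t : {set 'I_n}) (b : 'cV[int]_d) (x : 'cV[int]_n) : Prop :=
  A *m x = b /\ forall j, j \notin t -> 0 <= x j 0.

Definition G_optimal (s t : {set 'I_n}) (b : 'cV[int]_d) (x : 'cV[int]_n) : Prop :=
  G_feasible t b x /\
  forall x', G_feasible t b x' -> Gobj s t x <= Gobj s t x'.

(* G^tau(b) solves IP_{A,c}(b): its optimal solution is non-negative *)
Definition G_solves (s t : {set 'I_n}) (b : 'cV[int]_d) : Prop :=
  (exists x, G_optimal s t b x) /\
  (forall x, G_optimal s t b x -> nonneg_vec x).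

Definition lattice_basis (B : 'M[int]_(n, n - d)) : Prop :=
  A *m B = 0 /\
  forall x : 'cV[int]_n, A *m x = 0 ->
    exists! z : 'cV[int]_(n - d), x = B *m z.

Definition Q (B : 'M[int]_(n, n - d)) (u : 'cV[int]_n) (z : 'cV[R]_(n - d)) : Prop :=
  (forall i, (toR B *m z) i 0 <= (u i 0)%:~R) /\
  ((- (toR c *m toR B)) *m z) 0 0 <= 0.

Definition Qbar (B : 'M[int]_(n, n - d)) (t : {set 'I_n}) (u : 'cV[int]_n)
    (z : 'cV[R]_(n - d)) : Prop :=
  (forall i, i \notin t -> (toR B *m z) i 0 <= (u i 0)%:~R) /\
  ((- (toR c *m toR B)) *m z) 0 0 <= 0.

Definition int_points_trivial (P : 'cV[R]_(n - d) -> Prop) : Prop :=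
  forall z : 'cV[int]_(n - d), P (toR z) <-> z = 0.

End IPDefs.

(* Main.v *)
Require Import Defs.
From HB Require Import structures.
From mathcomp Require Import all_boot all_order all_algebra.
From mathcomp Require Import reals lra.
Import Order.TTheory GRing.Theory Num.Theory.
Local Open Scope ring_scope.

Lemma toRM (R : realType) m k p (M : 'M[int]_(m,k)) (N : 'M[int]_(k,p)) :
  toR R (M *m N) = toR R M *m toR R N.
Proof. exact: map_mxM. Qed.

Lemma toRE (R : realType) m k (M : 'M[int]_(m,k)) i j : toR R M i j = (M i j)%:~R.
Proof. by rewrite mxE. Qed.

Lemma Q_int (R : realType) d n (c : 'rV[int]_n) (B : 'M[int]_(n, n - d)) u z :
  @Q R d n c B u (toR R z) <->
  (forall i, (B *m z) i 0 <= u i 0) /\ 0 <= (c *m B *m z) 0 0.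
Proof.
rewrite /Q -!toRM mulNmx -toRM mxE toRE oppr_le0 ler0z.
split=> -[H1 H2]; split=> // i.
  by move: (H1 i); rewrite toRE ler_int.
by rewrite toRE ler_int.
Qed.

Lemma Qbar_int (R : realType) d n (c : 'rV[int]_n) (B : 'M[int]_(n, n - d)) t u z :
  @Qbar R d n c B t u (toR R z) <->
  (forall i, i \notin t -> (B *m z) i 0 <= u i 0) /\ 0 <= (c *m B *m z) 0 0.
Proof.
rewrite /Qbar -!toRM mulNmx -toRM mxE toRE oppr_le0 ler0z.
split=> -[H1 H2]; split=> // i Hi.
  by move: (H1 i Hi); rewrite toRE ler_int.
by rewrite toRE ler_int; apply: H1.
Qed.

Lemma cdotB n (c : 'rV[int]_n) (u : 'cV[int]_n) (w : 'cV[int]_n) :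
  cdot c (u - w) = cdot c u - cdot c w.
Proof. by rewrite /cdot mulmxBr !mxE. Qed.

Lemma basis_inj d n (A : 'M[int]_(d, n)) (B : 'M[int]_(n, n - d)) (z : 'cV[int]_(n - d)) :
  lattice_basis A B -> B *m z = 0 -> z = 0.
Proof.
move=> [AB0 Hb] Bz.
have [z0 [_ Hu]] := Hb (0 : 'cV[int]_n) (mulmx0 _ _).
rewrite -(Hu z); last by rewrite Bz.
by apply: Hu; rewrite mulmx0.
Qed.

Lemma kernel_rep d n (A : 'M[int]_(d, n)) (B : 'M[int]_(n, n - d)) (u x : 'cV[int]_n) :
  lattice_basis A B -> A *m x = A *m u -> exists z, B *m z = u - x.
Proof.
move=> [AB0 Hb] Ax.
have [|z [Hz _]] := Hb (u - x); first by rewrite mulmxBr Ax subrr.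
by exists z.
Qed.

Lemma part1 (R : realType) d n (A : 'M[int]_(d, n)) (c : 'rV[int]_n)
  (B : 'M[int]_(n, n - d)) :
  generic R A c -> lattice_basis A B ->
  forall u : 'cV[int]_n, nonneg_vec u ->
     (Oc A c u <-> @int_points_trivial R d n (@Q R d n c B u)).
Proof.
move=> [_ Hgen] Hbas u u0; split.
  move=> [b [Hb [_ Au Hopt]]]; have [_ Huniq] := Hgen b Hb.
  move=> z; rewrite Q_int; split; last first.
    by move=> ->; rewrite !mulmx0 mxE; split=> // i; rewrite mxE.
  move=> [H1 H2].
  have Hv : IP_optimal A c b (u - B *m z).
    split.
    - by move=> i; move: (H1 i); rewrite !mxE subr_ge0.
    - by rewrite mulmxBr mulmxA Hbas.1 mul0mx subr0.
    - move=> x x0 Ax; rewrite cdotB (le_trans _ (Hopt x x0 Ax)) //.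
      by rewrite /cdot mulmxA lerBlDr lerDl.
  have Heq := Huniq _ _ (And3 u0 Au Hopt) Hv.
  apply: (@basis_inj d n A B z Hbas).
  have : u - (u - B *m z) = 0 by rewrite -Heq subrr.
  by rewrite opprB addrC subrK.
move=> Htriv; exists (A *m u); split; first by exists u.
split=> // x x0 Ax.
have [z Hz] := @kernel_rep d n A B u x Hbas Ax.
rewrite leNgt; apply/negP => Hlt.
have : z = 0.
  apply/Htriv; rewrite Q_int; split.
    by move=> i; rewrite Hz !mxE lerBlDr lerDl x0.
  by rewrite -mulmxA Hz -/(cdot c _) cdotB subr_ge0 ltW.
move=> z0; move: Hz; rewrite z0 mulmx0 => /eqP; rewrite eq_sym subr_eq0 => /eqP xu.
by move: Hlt; rewrite xu ltxx.
Qed.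

Lemma colsub_mul (R : realType) d n k (y : 'rV[R]_d) (M : 'M[R]_(d, n))
  (f : 'I_k -> 'I_n) i : (y *m colsub f M) 0 i = (y *m M) 0 (f i).
Proof. by rewrite !mxE; apply: eq_bigr => j _; rewrite mxE. Qed.

Lemma cast_lemma (R : realType) d m (M : 'M[R]_(d, m)) (v : 'rV[R]_m) (y : 'rV[R]_d) :
  m = d -> \rank M = m -> y *m M = v ->
  y *m conform_mx (1%:M : 'M[R]_d) M = conform_mx (0 : 'rV[R]_d) v /\ conform_mx (1%:M : 'M[R]_d) M \in unitmx.
Proof.
move=> e; subst m => rk yM; rewrite !conform_mx_id; split=> //.
by rewrite -row_free_unit /row_free rk.
Qed.

Lemma ctildeE (R : realType) d n (A : 'M[int]_(d, n)) (c : 'rV[int]_n) (s : {set 'I_n})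
  (y : 'rV[R]_d) :
  (forall j : 'I_n,
    (j \in s -> (y *m toR R A) 0 j = (c 0 j)%:~R) /\
    (j \notin s -> (y *m toR R A) 0 j < (c 0 j)%:~R)) ->
  #|s| = d -> \rank (Asub R A s) = #|s| ->
  forall j, ctilde R A c s j = (c 0 j)%:~R - (y *m toR R A) 0 j.
Proof.
move=> Hy cs rk j.
have yA : y *m Asub R A s = csub R c s.
  apply/matrixP => i k; rewrite ord1 colsub_mul /csub [RHS]mxE [RHS]mxE.
  exact: (Hy _).1 (enum_valP k).
have [Hc Hu] := @cast_lemma R d _ (Asub R A s) (csub R c s) y cs rk yA.
have Hw : csq R d c s *m invmx (Asq R A s) = y by rewrite /csq -Hc mulmxK.
rewrite /ctilde Hw; case: ifP => Hj //.
by rewrite (Hy j).1 // subrr.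
Qed.

Lemma max_card (R : realType) d n (A : 'M[int]_(d, n)) (c : 'rV[int]_n)
  (s : {set 'I_n}) :
  \rank (toR R A) = d -> Delta_triangulation R A c -> maximal_face R A c s ->
  #|s| = d.
Proof.
move=> rkA Htri [[y Hy] Hmax].
have rks := Htri s (ex_intro _ y Hy).
have le_sd : (#|s| <= d)%N by rewrite -rks rank_leq_row.
apply/eqP; rewrite eqn_leq le_sd /= leqNgt; apply/negP => lt_sd.
pose K := kermx (Asub R A s).
have rkK : (0 < \rank K)%N by rewrite mxrank_ker rks subn_gt0.
have [i0 Hi0] : exists i, row i K != 0.
  apply/existsP; apply: contraTT rkK => /existsPn H.
  have -> : K = 0.
    apply/row_matrixP => i; rewrite row0; apply/eqP.
    by move: (H i); rewrite negbK.
  by rewrite mxrank0.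
pose v0 := row i0 K.
have v0s : v0 *m Asub R A s = 0 by rewrite /v0 -row_mul mulmx_ker row0.
have v0j : forall j, j \in s -> (v0 *m toR R A) 0 j = 0.
  move=> j js; move/matrixP: v0s => /(_ 0 (enum_rank_in js j : 'I_#|s|)).
  by rewrite /= /Asub colsub_mul enum_rankK_in // => ->; rewrite mxE.
have rfA : row_free (toR R A) by rewrite /row_free rkA.
have w0 : v0 *m toR R A != 0.
  apply: contra Hi0 => /eqP w0; apply/eqP; apply: (row_free_inj rfA).
  by rewrite mul0mx.
have [j0 Hj0] : exists j, (v0 *m toR R A) 0 j != 0.
  apply/existsP; apply: contraNT w0 => /existsPn H.
  apply/eqP/matrixP => i k; rewrite ord1 [RHS]mxE; apply/eqP.
  by move: (H k); rewrite negbK.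
pose v := if 0 < (v0 *m toR R A) 0 j0 then v0 else - v0.
pose a j := (v *m toR R A) 0 j.
pose g j := (c 0 j)%:~R - (y *m toR R A) 0 j.
have vs : forall j, j \in s -> a j = 0.
  move=> j js; rewrite /a /v; case: ifP => _; first exact: v0j.
  by rewrite mulNmx mxE v0j // oppr0.
have vj0 : 0 < a j0.
  rewrite /a /v; case: ifP => // /negbT; rewrite mulNmx => H; rewrite [X in 0 < X]mxE oppr_gt0.
  by move: H; rewrite -leNgt le_eqVlt (negbTE Hj0).
case: (@arg_minP _ _ _ j0 (fun j => 0 < a j) (fun j => g j / a j) vj0) => js Pjs Hmin.
have jsns : js \notin s.
  by apply/negP => /vs H; move: Pjs; rewrite H ltxx.
pose t := g js / a js.
have gpos : 0 < g js by rewrite /g subr_gt0 (Hy js).2.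
have tpos : 0 < t by rewrite /t divr_gt0.
pose y' := y + t *: v.
have ya : forall j, (y' *m toR R A) 0 j = (y *m toR R A) 0 j + t * a j.
  by move=> j; rewrite /y' mulmxDl -scalemxAl mxE [X in _ + X]mxE.
pose s' := [set j | (y' *m toR R A) 0 j == (c 0 j)%:~R].
have Hle : forall j, (y' *m toR R A) 0 j <= (c 0 j)%:~R.
  move=> j; rewrite ya; case: (boolP (j \in s)) => js'.
    by rewrite vs // mulr0 addr0 (Hy j).1.
  have := (Hy j).2 js'; case: (ltrP 0 (a j)) => aj.
    have := Hmin j aj; rewrite -/t ler_pdivlMr // /g => H _; lra.
  move=> _; have : t * a j <= 0 by rewrite mulr_ge0_le0 // ltW.
  have := (Hy j).2 js'; lra.
have Ds' : in_Delta R A c s'.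
  exists y' => j; split; rewrite inE; first by move/eqP.
  by move=> Hn; rewrite lt_neqAle Hn Hle.
have ss' : s \subset s'.
  apply/subsetP => j js'; rewrite inE ya vs // mulr0 addr0 (Hy j).1 //.
have Heq := Hmax s' Ds' ss'.
have : js \in s'.
  rewrite inE ya /t divfK; last by rewrite gt_eqF.
  by rewrite /g addrC subrK.
by rewrite Heq (negbTE jsns).
Qed.

Lemma GobjE (R : realType) d n (A : 'M[int]_(d, n)) (c : 'rV[int]_n)
  (s t : {set 'I_n}) (y : 'rV[R]_d) :
  (forall j, ctilde R A c s j = (c 0 j)%:~R - (y *m toR R A) 0 j) ->
  t \subset s ->
  forall x, Gobj R A c s t x = (cdot c x)%:~R - (y *m toR R (A *m x)) 0 0.
Proof.
move=> Hct ts x; rewrite /Gobj.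
have -> : \sum_(j | j \notin t) ctilde R A c s j * (x j 0)%:~R =
          \sum_j ctilde R A c s j * (x j 0)%:~R.
  rewrite [RHS](bigID (fun j => j \in t)) /= [X in _ = X + _]big1 ?add0r // => j jt.
  by rewrite /ctilde (subsetP ts j jt) mul0r.
have -> : (cdot c x)%:~R = \sum_j (c 0 j)%:~R * (x j 0)%:~R :> R.
  rewrite /cdot mxE rmorph_sum; apply: eq_bigr => j _; exact: rmorphM.
have -> : (y *m toR R (A *m x)) 0 0 = \sum_j (y *m toR R A) 0 j * (x j 0)%:~R.
  by rewrite toRM mulmxA mxE; apply: eq_bigr => j _; rewrite toRE.
rewrite -sumrB; apply: eq_bigr => j _; by rewrite Hct mulrBl.
Qed.

Theorem lemma2p9 (R : realType) (d n : nat) (A : 'M[int]_(d, n))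
    (c : 'rV[int]_n) (B : 'M[int]_(n, n - d)) :
  \rank (toR R A) = d ->
  cone_pointed R A ->
  nonneg_kernel_trivial R A ->
  lattice_full A ->
  generic R A c ->
  lattice_basis A B ->
  (forall u : 'cV[int]_n, nonneg_vec u ->
     (Oc A c u <-> @int_points_trivial R d n (@Q R d n c B u))) /\
  (forall (u : 'cV[int]_n) (tau sigma : {set 'I_n}),
     Oc A c u -> in_Delta R A c tau -> maximal_face R A c sigma ->
     tau \subset sigma ->
     (G_solves R A c sigma tau (A *m u) <->
      @int_points_trivial R d n (@Qbar R d n c B tau u))).
Proof.
move=> rkA _ _ _ Hgen Hbas; split; first exact: part1.
move=> u t s Hu _ Hmax ts.
have cs := @max_card R d n A c s rkA Hgen.1 Hmax.
have [[y Hy] _] := Hmax.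
have rks := Hgen.1 s (ex_intro _ y Hy).
have Hct := @ctildeE R d n A c s y Hy cs rks.
have HG := @GobjE R d n A c s t y Hct ts.
have Hcmp : forall x x', A *m x = A *m x' ->
    (Gobj R A c s t x <= Gobj R A c s t x') = (cdot c x <= cdot c x').
  by move=> x x' E; rewrite !HG E lerD2r ler_int.
have [b [Hb [u0 Au Hopt]]] := Hu.
rewrite -Au in Hb Hopt.
have [_ Huniq] := Hgen.2 _ Hb.
split.
  move=> [[xs [[Axs xst] Hopts]] Hall] z; rewrite Qbar_int; split; last first.
    by move=> ->; rewrite !mulmx0 mxE; split=> // i _; rewrite mxE; exact: u0.
  move=> [H1 H2].
  pose x := u - B *m z.
  have Ax : A *m x = A *m u by rewrite mulmxBr mulmxA Hbas.1 mul0mx subr0.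
  have Gfx : G_feasible A t (A *m u) x.
    split=> // j jt; move: (H1 j jt); by rewrite !mxE subr_ge0.
  have cxu : cdot c x <= cdot c u.
    by rewrite cdotB lerBlDr lerDl /cdot mulmxA.
  have xsnn := Hall xs (conj (conj Axs xst) Hopts).
  have cuxs := Hopt xs xsnn Axs.
  have cxsx : cdot c xs <= cdot c x by rewrite -Hcmp ?Axs ?Ax //; exact: Hopts.
  have Goptx : G_optimal R A c s t (A *m u) x.
    split=> // x' Gf'; rewrite Hcmp ?Ax ?Gf'.1 //.
    apply: le_trans (_ : cdot c xs <= _).
      exact: le_trans cxu cuxs.
    by rewrite -Hcmp ?Axs ?Gf'.1 //; exact: Hopts.
  have xnn := Hall x Goptx.
  have Heq := Huniq _ _ (And3 u0 (erefl _) Hopt)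
    (And3 xnn Ax (fun x' nn Ax' => le_trans cxu (Hopt x' nn Ax'))).
  apply: (@basis_inj d n A B z Hbas).
  have H0 : u - x = 0 by rewrite -Heq subrr.
  by move: H0; rewrite /x opprB addrC subrK.
move=> Htriv.
have key : forall x, G_feasible A t (A *m u) x ->
    cdot c u <= cdot c x /\ (cdot c x <= cdot c u -> x = u).
  move=> x [Ax xt]; have [z Hz] := @kernel_rep d n A B u x Hbas Ax.
  have Hq : cdot c x <= cdot c u -> x = u.
    move=> le; have : z = 0.
      apply/Htriv; rewrite Qbar_int; split.
        by move=> i it; rewrite Hz !mxE lerBlDr lerDl xt.
      by rewrite -mulmxA Hz -/(cdot c _) cdotB subr_ge0.
    move=> z0; move/eqP: Hz; rewrite z0 mulmx0 eq_sym subr_eq0 => /eqP.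
    by move=> ->.
  split=> //; rewrite leNgt; apply/negP => Hlt.
  by move: (Hlt); rewrite (Hq (ltW Hlt)) ltxx.
have Gfu : G_feasible A t (A *m u) u by split=> // j _; exact: u0.
split.
  exists u; split=> // x' Gf'; rewrite Hcmp ?Gf'.1 //; exact: (key x' Gf').1.
move=> x [Gfx Hoptx]; have := Hoptx u Gfu; rewrite Hcmp ?Gfx.1 // => le.
by rewrite ((key x Gfx).2 le).
Qed.
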